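(* Let $f:\mathbb{R}^n\to\mathbb{R}$ be such that $\nabla f$ is Lipschitz continuous with constant $L$ on an open bounded domain $\mathcal{X}\subset\mathbb{R}^n$ containing $\overline{B}(y^0,\delta)$. Let $q=(n^2+3n)/2$, $n<p<q$, $\delta>0$, and let $\mathcal{Y}=\{y^0,\dots,y^p\}\subset\overline{B}(y^0,\delta)$ be poised in the minimum Frobenius norm sense and $\Lambda$-poised in $\overline{B}(y^0,\delta)$ in the minimum Frobenius norm sense, for some $\Lambda>0$. Let $\delta_{\max}>0$ with $\delta\le\delta_{\max}$. Let $\kappa\ge 0$ and let $\mathrm{m}$ be a relaxed minimum Frobenius norm model, i.e. $\mathrm{m}(x)=\sum_{j=0}^{p}\ell_j(x)\gamma_j$, where $\ell_0,\dots,\ell_p$ are the minimum Frobenius norm Lagrange polynomials of $\mathcal{Y}$ and the real numbers $\gamma_j$ are such that $|\mathrm{m}(y^j)-f(y^j)|\le\kappa\delta^2$ for all $j=0,\dots,p$. Then, for all $x$, \[ \|\nabla^2\mathrm{m}(x)\|\le\Big(\kappa+\frac{L}{2}\Big)\frac{4\Lambda(p+1)\sqrt{2(q+1)}}{c(\delta_{\max})^2}, \] where $c(\delta_{\max})=\min\{1,1/\delta_{\max},1/\delta_{\max}^2\}$.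
   Context: $\overline{B}(x,\delta)$ is the closed Euclidean ball; $\|\cdot\|$ is the Euclidean norm / induced matrix norm, $\|\cdot\|_\infty$ the max norm. Natural basis of quadratic polynomials: $\overline\phi_L(x)=(1,x_1,\dots,x_n)$ and $\overline\phi_Q(x)=(\tfrac12x_1^2,x_1x_2,x_1x_3,\dots,x_1x_n,\tfrac12x_2^2,\dots,x_{n-1}x_n,\tfrac12x_n^2)$; $\overline\phi=(\overline\phi_L,\overline\phi_Q)$ has $q+1$ components. For a list of functions $\phi=(\phi_0,\dots,\phi_r)$, $\mathbf{M}(\phi,\mathcal{Y})$ is the $(p+1)\times(r+1)$ matrix with $(i,k)$ entry $\phi_k(y^i)$. The set $\mathcal{Y}$ is poised in the minimum Frobenius norm sense if the matrix $\begin{bmatrix}\mathbf{M}(\overline\phi_Q,\mathcal{Y})\mathbf{M}(\overline\phi_Q,\mathcal{Y})^T & \mathbf{M}(\overline\phi_L,\mathcal{Y})\\ \mathbf{M}(\overline\phi_L,\mathcal{Y})^T & 0\end{bmatrix}$ is nonsingular. Minimum Frobenius norm Lagrange polynomials: $\ell_j(x)=\alpha_j^T\overline\phi(x)$, $j=0,\dots,p$, where $\alpha_j=((\alpha_j)_L,(\alpha_j)_Q)$ solves $\min\frac12\|\alpha_Q\|^2$ subject to $\mathbf{M}(\overline\phi_L,\mathcal{Y})\alpha_L+\mathbf{M}(\overline\phi_Q,\mathcal{Y})\alpha_Q=e_{j+1}$, with $e_{j+1}$ the $(j+1)$-th canonical vector of $\mathbb{R}^{p+1}$. A poised set $\mathcal{Y}$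 is $\Lambda$-poised in $B\subseteq\mathbb{R}^n$ in the minimum Frobenius norm sense if for every $x\in B$ the solution $\lambda(x)\in\mathbb{R}^{p+1}$ of $\min\frac12\|\mathbf{M}(\overline\phi_Q,\mathcal{Y})^T\lambda-\overline\phi_Q(x)\|^2$ subject to $\mathbf{M}(\overline\phi_L,\mathcal{Y})^T\lambda=\overline\phi_L(x)$ satisfies $\|\lambda(x)\|_\infty\le\Lambda$. *)

(* Defs.v *)
From HB Require Import structures.
From mathcomp Require Import all_boot all_order all_algebra.
From mathcomp Require Import all_classical all_reals all_analysis.
Set Implicit Arguments. Unset Strict Implicit. Unset Printing Implicit Defensive.
Import Order.TTheory GRing.Theory Num.Theory.
Import numFieldNormedType.Exports.
Local Open Scope classical_set_scope.
Local Open Scope ring_scope.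

Section Defs.
Variable R : realType.

Definition enorm {m k : nat} (A : 'M[R]_(m, k)) : R :=
  Num.sqrt (\sum_i \sum_j (A i j) ^+ 2).

Definition infnorm {m : nat} (v : 'cV[R]_m) : R :=
  \big[Num.max/0]_i `|v i 0|.

Definition opnorm {n : nat} (H : 'M[R]_n) : R :=
  sup [set enorm (H *m v) | v in [set v : 'cV[R]_n | enorm v <= 1]].

Definition cball {n : nat} (c : 'rV[R]_n) (d : R) : set 'rV[R]_n :=
  [set x | enorm (x - c) <= d].

(* canonical basis vector e_i of R^n (points of R^n are row vectors) *)
Definition evec {n : nat} (i : 'I_n) : 'rV[R]_n := delta_mx 0 i.

Definition grad {n : nat} (f : 'rV[R]_n -> R) (x : 'rV[R]_n) : 'rV[R]_n :=
  \row_i ('D_(evec i) f x).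

Definition hessian {n : nat} (f : 'rV[R]_n -> R) (x : 'rV[R]_n) : 'M[R]_n :=
  \matrix_(i, j) ('D_(evec j) (fun y => 'D_(evec i) f y) x).

(* number of quadratic monomials: n(n+1)/2 ; q = (n^2+3n)/2 *)
Definition nQ (n : nat) : nat := (n * n.+1)./2.
Definition qdim (n : nat) : nat := (n * n + 3 * n)./2.

(* i-th coordinate (0-based, as a nat index) of x *)
Definition xc {n : nat} (x : 'rV[R]_n) (i : nat) : R :=
  nth 0 [seq x 0 k | k <- enum 'I_n] i.

Definition phiL {n : nat} (x : 'rV[R]_n) : 'rV[R]_(n.+1) :=
  \row_(k < n.+1) (if (k == 0 :> nat) then 1 else xc x k.-1).

(* phi_Q(x) = (x_1^2/2, x_1x_2, ..., x_1x_n, x_2^2/2, ..., x_{n-1}x_n, x_n^2/2) *)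
Definition phiQ_seq {n : nat} (x : 'rV[R]_n) : seq R :=
  flatten [seq [seq (if i == j then (xc x i) ^+ 2 / 2
                     else xc x i * xc x j) | j <- iota i (n - i)]
          | i <- iota 0 n].

Definition phiQ {n : nat} (x : 'rV[R]_n) : 'rV[R]_(nQ n) :=
  \row_(k < nQ n) nth 0 (phiQ_seq x) k.

Definition ML {n p : nat} (y : 'I_p.+1 -> 'rV[R]_n) : 'M[R]_(p.+1, n.+1) :=
  \matrix_(i, k) phiL (y i) 0 k.
Definition MQ {n p : nat} (y : 'I_p.+1 -> 'rV[R]_n) : 'M[R]_(p.+1, nQ n) :=
  \matrix_(i, k) phiQ (y i) 0 k.

Definition mfn_poised {n p : nat} (y : 'I_p.+1 -> 'rV[R]_n) : Prop :=
  block_mx (MQ y *m (MQ y)^T) (ML y) (ML y)^T (0 : 'M[R]_(n.+1))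
    \in unitmx.

Definition mfn_lagrange_coeffs {n p : nat} (y : 'I_p.+1 -> 'rV[R]_n)
    (j : 'I_p.+1) (aL : 'cV[R]_(n.+1)) (aQ : 'cV[R]_(nQ n)) : Prop :=
  ML y *m aL + MQ y *m aQ = delta_mx j 0 /\
  forall (bL : 'cV[R]_(n.+1)) (bQ : 'cV[R]_(nQ n)),
    ML y *m bL + MQ y *m bQ = delta_mx j 0 ->
    (enorm aQ) ^+ 2 / 2 <= (enorm bQ) ^+ 2 / 2.

Definition lagr_eval {n : nat} (aL : 'cV[R]_(n.+1)) (aQ : 'cV[R]_(nQ n))
    (x : 'rV[R]_n) : R :=
  (phiL x *m aL) 0 0 + (phiQ x *m aQ) 0 0.

Definition lambda_sol {n p : nat} (y : 'I_p.+1 -> 'rV[R]_n) (x : 'rV[R]_n)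
    (lam : 'cV[R]_(p.+1)) : Prop :=
  (ML y)^T *m lam = (phiL x)^T /\
  forall mu : 'cV[R]_(p.+1), (ML y)^T *m mu = (phiL x)^T ->
    (enorm ((MQ y)^T *m lam - (phiQ x)^T)) ^+ 2 / 2
      <= (enorm ((MQ y)^T *m mu - (phiQ x)^T)) ^+ 2 / 2.

Definition mfn_Lambda_poised {n p : nat} (y : 'I_p.+1 -> 'rV[R]_n)
    (Lam : R) (B : set 'rV[R]_n) : Prop :=
  mfn_poised y /\
  forall x, B x -> forall lam, lambda_sol y x lam -> infnorm lam <= Lam.

Definition cdelta (dmax : R) : R :=
  Num.min 1 (Num.min (dmax^-1) ((dmax ^+ 2)^-1)).

End Defs.

(* Main.v *)
Require Import Defs.
From HB Require Import structures.
From mathcomp Require Import all_boot all_order all_algebra.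
From mathcomp Require Import all_classical all_reals all_analysis.
From mathcomp Require Import ring lra.
Import Order.TTheory GRing.Theory Num.Theory.
Import numFieldNormedType.Exports.
Local Open Scope classical_set_scope.
Local Open Scope ring_scope.
Set Implicit Arguments. Unset Strict Implicit. Unset Printing Implicit Defensive.

Section PartA.
Variable R : realType.

Definition dot {m : nat} (a b : 'cV[R]_m) : R := (a^T *m b) 0 0.

Lemma dotE m (a b : 'cV[R]_m) : dot a b = \sum_i a i 0 * b i 0.
Proof. by rewrite /dot mxE; apply: eq_bigr => i _; rewrite mxE. Qed.

Lemma dotC m (a b : 'cV[R]_m) : dot a b = dot b a.
Proof. by rewrite !dotE; apply: eq_bigr => i _; rewrite mulrC. Qed.

Lemma dotDl m (a b c : 'cV[R]_m) : dot (a + b) c = dot a c + dot b c.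
Proof. by rewrite !dotE -big_split; apply: eq_bigr => i _; rewrite mxE mulrDl. Qed.

Lemma dotBl m (a b c : 'cV[R]_m) : dot (a - b) c = dot a c - dot b c.
Proof. by rewrite !dotE -sumrB; apply: eq_bigr => i _; rewrite !mxE mulrBl. Qed.

Lemma dotZl m t (a c : 'cV[R]_m) : dot (t *: a) c = t * dot a c.
Proof. by rewrite !dotE mulr_sumr; apply: eq_bigr => i _; rewrite mxE mulrA. Qed.

Lemma dotDr m (a b c : 'cV[R]_m) : dot c (a + b) = dot c a + dot c b.
Proof. by rewrite !(dotC c) dotDl. Qed.
Lemma dotBr m (a b c : 'cV[R]_m) : dot c (a - b) = dot c a - dot c b.
Proof. by rewrite !(dotC c) dotBl. Qed.
Lemma dotZr m t (a c : 'cV[R]_m) : dot c (t *: a) = t * dot c a.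
Proof. by rewrite !(dotC c) dotZl. Qed.
Lemma dot0r m (a : 'cV[R]_m) : dot a 0 = 0.
Proof. by rewrite dotE big1 // => i _; rewrite mxE mulr0. Qed.
Lemma dot0l m (a : 'cV[R]_m) : dot 0 a = 0.
Proof. by rewrite dotC dot0r. Qed.

Lemma dot_suml m (I : finType) (F : I -> 'cV[R]_m) b :
  dot (\sum_j F j) b = \sum_j dot (F j) b.
Proof.
rewrite dotE; under eq_bigr => i _ do rewrite summxE mulr_suml.
rewrite exchange_big; apply: eq_bigr => j _; by rewrite dotE.
Qed.

Lemma dot_mulmxl m k (A : 'M[R]_(m, k)) a b : dot (A *m a) b = dot a (A^T *m b).
Proof. by rewrite /dot trmx_mul mulmxA. Qed.

Lemma dot_ge0 m (a : 'cV[R]_m) : 0 <= dot a a.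
Proof. by rewrite dotE sumr_ge0 // => i _; rewrite -expr2 sqr_ge0. Qed.

Lemma dot_eq0 m (a : 'cV[R]_m) : dot a a = 0 -> a = 0.
Proof.
rewrite dotE => /eqP; rewrite psumr_eq0; last by move=> i _; rewrite -expr2 sqr_ge0.
move=> /allP H; apply/matrixP => i j; rewrite (ord1 j) mxE.
have := H i (mem_index_enum _); rewrite implyTb mulf_eq0 orbb.
by move/eqP.
Qed.

Lemma enorm_sq m (a : 'cV[R]_m) : enorm a ^+ 2 = dot a a.
Proof.
rewrite /enorm sqr_sqrtr; last by rewrite sumr_ge0 // => i _; rewrite sumr_ge0 // => j _; rewrite sqr_ge0.
by rewrite dotE; apply: eq_bigr => i _; rewrite big_ord1 expr2.
Qed.

Lemma mul_delta_col m k (A : 'M[R]_(m, k)) (c : 'I_k) (j : 'I_m) :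
  (A *m delta_mx c (0 : 'I_1)) j 0 = A j c.
Proof.
rewrite mxE (bigD1 c) //= mxE !eqxx mulr1 big1 ?addr0 // => l /negbTE nlc.
by rewrite mxE nlc mulr0.
Qed.

Lemma sum_delta_col m (C : 'cV[R]_m) : \sum_j C j 0 *: delta_mx j 0 = C.
Proof.
apply/matrixP => i k; rewrite (ord1 k) summxE (bigD1 i) //= !mxE !eqxx mulr1.
rewrite big1 ?addr0 // => j /negbTE nji; rewrite !mxE eq_sym nji mulr0 //.
Qed.

Variables (n p : nat) (y : 'I_p.+1 -> 'rV[R]_n).
Variables (aL : 'I_p.+1 -> 'cV[R]_(n.+1)) (aQ : 'I_p.+1 -> 'cV[R]_(nQ n)).
Hypothesis Hpoised : mfn_poised y.
Hypothesis Hlag : forall j, mfn_lagrange_coeffs y j (aL j) (aQ j).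

Lemma hom_orth j bL bQ :
  ML y *m bL + MQ y *m bQ = 0 -> dot (aQ j) bQ = 0.
Proof.
move=> hom; have [feas opt] := Hlag j.
have H t : dot (aQ j) (aQ j) <= dot (aQ j + t *: bQ) (aQ j + t *: bQ).
  have Hf : ML y *m (aL j + t *: bL) + MQ y *m (aQ j + t *: bQ) = delta_mx j 0.
    rewrite !mulmxDr -!scalemxAr addrACA feas -scalerDr hom scaler0 addr0 //.
  have := opt _ _ Hf; rewrite !enorm_sq; lra.
set s := dot (aQ j) bQ; set N := dot bQ bQ.
have N0 : 0 <= N by exact: dot_ge0.
have := H (- s / (N + 1)).
rewrite dotDl !dotDr !dotZl !dotZr (dotC bQ (aQ j)) -/s -/N.
set t := - s / (N + 1) => Ht.
have tN : t * (N + 1) = - s by rewrite /t divfK // gt_eqF // ltr_wpDl.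
have : t = 0 by nra.
by move=> t0; move: tN; rewrite t0 mul0r => /eqP; rewrite eq_sym oppr_eq0 => /eqP.
Qed.

Lemma ML_inj (v : 'cV[R]_(n.+1)) : ML y *m v = 0 -> v = 0.
Proof.
move=> Hv.
have H : block_mx (MQ y *m (MQ y)^T) (ML y) (ML y)^T (0 : 'M[R]_(n.+1)) *m col_mx 0 v = 0.
  by rewrite mul_block_col !mulmx0 mul0mx Hv !addr0 col_mx0.
have := congr1 (mulmx (invmx (block_mx (MQ y *m (MQ y)^T) (ML y) (ML y)^T (0 : 'M[R]_(n.+1))))) H.
by rewrite mulKmx // mulmx0 => /eqP; rewrite col_mx_eq0 => /andP [_ /eqP].
Qed.

Lemma mfn_combo (C : 'cV[R]_(p.+1)) bL bQ :
  ML y *m bL + MQ y *m bQ = C ->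
  (forall hL hQ, ML y *m hL + MQ y *m hQ = 0 -> dot bQ hQ = 0) ->
  \sum_j C j 0 *: aL j = bL /\ \sum_j C j 0 *: aQ j = bQ.
Proof.
move=> HC Hb.
set BL := \sum_j C j 0 *: aL j; set BQ := \sum_j C j 0 *: aQ j.
have HB : ML y *m BL + MQ y *m BQ = C.
  rewrite !mulmx_sumr -big_split /= -[RHS]sum_delta_col.
  apply: eq_bigr => j _; rewrite -!scalemxAr -scalerDr; by case: (Hlag j) => -> _.
have Hh : ML y *m (BL - bL) + MQ y *m (BQ - bQ) = 0.
  by rewrite !mulmxBr addrACA -opprD HB HC subrr.
have h1 : dot BQ (BQ - bQ) = 0.
  rewrite /BQ dot_suml big1 // => j _; rewrite dotZl (hom_orth j Hh) mulr0 //.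
have h2 : dot bQ (BQ - bQ) = 0 by apply: Hb Hh.
have EQ : BQ - bQ = 0 by apply: dot_eq0; rewrite dotBl h1 h2 subrr.
split; last by apply/eqP; rewrite -subr_eq0 EQ.
apply/eqP; rewrite -subr_eq0; apply/eqP/ML_inj.
by move: Hh; rewrite EQ mulmx0 addr0.
Qed.

Lemma dotNr m (a c : 'cV[R]_m) : dot c (- a) = - dot c a.
Proof. by rewrite !dotE -sumrN; apply: eq_bigr => i _; rewrite mxE mulrN. Qed.

Lemma dot_pyth m (u v : 'cV[R]_m) : dot v u = 0 -> dot u u <= dot (u + v) (u + v).
Proof.
move=> H; rewrite dotDl !dotDr H (dotC u v) H.
have := dot_ge0 v; lra.
Qed.

Definition lv (z : 'rV[R]_n) : 'cV[R]_(p.+1) := \col_j lagr_eval (aL j) (aQ j) z.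

Lemma lagr_combo (c : 'I_p.+1 -> R) z :
  lagr_eval (\sum_j c j *: aL j) (\sum_j c j *: aQ j) z =
  \sum_j c j * lagr_eval (aL j) (aQ j) z.
Proof.
rewrite /lagr_eval !mulmx_sumr !summxE -big_split; apply: eq_bigr => j _.
by rewrite -!scalemxAr !mxE mulrDr.
Qed.

Lemma lin_repr z : (ML y)^T *m lv z = (phiL z)^T.
Proof.
apply/matrixP => k l; rewrite (ord1 l) mxE [RHS]mxE.
have P1 : ML y *m delta_mx k (0 : 'I_1) + MQ y *m (0 : 'cV[R]_(nQ n)) = ML y *m delta_mx k (0 : 'I_1).
  by rewrite mulmx0 addr0.
have [E1 E2] := @mfn_combo (ML y *m delta_mx k (0 : 'I_1)) (delta_mx k 0) 0 P1
  (fun hL hQ _ => dot0l hQ).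
have := lagr_combo (fun j => (ML y *m delta_mx k (0 : 'I_1)) j 0) z.
rewrite E1 E2 /lagr_eval mulmx0 [X in _ + X]mxE addr0 mul_delta_col => ->.
by apply: eq_bigr => j _; rewrite mul_delta_col [(ML y)^T k j]mxE [lv z j 0]mxE.
Qed.

Lemma lambda_sol_lv z : lambda_sol y z (lv z).
Proof.
split; first exact: lin_repr.
move=> mu Hmu; rewrite !enorm_sq.
set d := mu - lv z.
have Hd : (ML y)^T *m d = 0 by rewrite mulmxBr Hmu lin_repr subrr.
set a := (MQ y)^T *m lv z - (phiQ z)^T.
have E : a + (MQ y)^T *m d = (MQ y)^T *m mu - (phiQ z)^T.
  by rewrite /a /d mulmxBr addrC addrA subrK.
set C := MQ y *m ((MQ y)^T *m d).
have P1 : ML y *m 0 + MQ y *m ((MQ y)^T *m d) = C by rewrite mulmx0 add0r.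
have P2 : forall hL hQ, ML y *m hL + MQ y *m hQ = 0 -> dot ((MQ y)^T *m d) hQ = 0.
  move=> hL hQ Hh; rewrite dot_mulmxl trmxK.
  have -> : MQ y *m hQ = - (ML y *m hL).
    by apply/eqP; rewrite -addr_eq0 addrC Hh.
  by rewrite dotNr dotC dot_mulmxl dotC Hd dot0l oppr0.
have [E1 E2] := @mfn_combo C 0 ((MQ y)^T *m d) P1 P2.
have Ecomb : (phiQ z *m ((MQ y)^T *m d)) 0 0 =
    \sum_j C j 0 * lagr_eval (aL j) (aQ j) z.
  by rewrite -lagr_combo E1 E2 /lagr_eval mulmx0 [X in X + _]mxE add0r.
have cross : dot ((MQ y)^T *m d) a = 0.
  rewrite /a dotBr -dot_mulmxl -/C dotE.
  have -> : \sum_i C i 0 * lv z i 0 = \sum_j C j 0 * lagr_eval (aL j) (aQ j) z.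
    by apply: eq_bigr => j _; rewrite [lv z j 0]mxE.
  rewrite -Ecomb dotE mxE; apply/eqP; rewrite subr_eq0; apply/eqP.
  by apply: eq_bigr => k _; rewrite [(phiQ z)^T k 0]mxE mulrC.
have -> : (MQ y)^T *m mu - (phiQ z)^T = a + (MQ y)^T *m d by rewrite E.
rewrite ler_pM2r ?invr_gt0 //; exact: dot_pyth.
Qed.

Lemma lagr_bound Lam (B : set 'rV[R]_n) z j :
  mfn_Lambda_poised y Lam B -> B z -> `|lagr_eval (aL j) (aQ j) z| <= Lam.
Proof.
move=> [_ H] Bz; have := H z Bz (lv z) (lambda_sol_lv z).
apply: le_trans; rewrite /infnorm.
have -> : `|lagr_eval (aL j) (aQ j) z| = `|lv z j 0| by rewrite mxE.
exact: (le_bigmax 0 (fun i => `|lv z i 0|) j).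
Qed.

Lemma interp i j : lagr_eval (aL j) (aQ j) (y i) = (i == j)%:R.
Proof.
have [feas _] := Hlag j.
have := congr1 (fun M : 'cV[R]_(p.+1) => M i 0) feas.
rewrite !mxE eqxx andbT => <-.
rewrite /lagr_eval !mxE; congr (_ + _); apply: eq_bigr => k _; rewrite !mxE //.
Qed.

End PartA.


Lemma lim_affine (R : realType) (g : R -> R) (A B : R) :
  (forall h, h != 0 -> g h = A + h * B) -> lim (g @ 0^') = A.
Proof.
move=> Hg; apply: cvg_lim => //.
have Hf : (fun h : R => A + h * B) @ 0^' --> A.
  rewrite -[X in _ --> X](addr0 A) -[X in _ --> _ + X](mul0r B).
  apply: cvgD; first exact: cvg_cst.
  apply: cvgMl; exact: nbhs_dnbhs.
apply: cvg_trans Hf; apply: near_eq_cvg; near=> h; rewrite Hg //.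
near: h; exact: nbhs_dnbhs_neq.
Unshelve. all: by end_near.
Qed.

Section PartB.
Variable R : realType.
Variable n : nat.

Lemma zmx_ij a b (i : 'I_a) (j : 'I_b) : (0 : 'M[R]_(a, b)) i j = 0.
Proof. by rewrite mxE. Qed.

Lemma addmx_ij a b (A B : 'M[R]_(a, b)) i j : (A + B) i j = A i j + B i j.
Proof. by rewrite mxE. Qed.
Lemma scalmx_ij a b t (A : 'M[R]_(a, b)) i j : (t *: A) i j = t * A i j.
Proof. by rewrite mxE. Qed.
Lemma oppmx_ij a b (A : 'M[R]_(a, b)) i j : (- A) i j = - A i j.
Proof. by rewrite mxE. Qed.

Definition quadf (c : R) (b : 'cV[R]_n) (S : 'M[R]_n) (z : 'rV[R]_n) : R :=
  c + (z *m b) 0 0 + (z *m S *m z^T) 0 0.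

Definition is_quad (q : 'rV[R]_n -> R) :=
  exists c b S, forall z, q z = quadf c b S z.

Lemma quad_ext (q q' : 'rV[R]_n -> R) : (forall z, q z = q' z) -> is_quad q -> is_quad q'.
Proof. by move=> E [c [b [S H]]]; exists c, b, S => z; rewrite -E. Qed.

Lemma quad_cst (c : R) : is_quad (fun _ => c).
Proof. by exists c, 0, 0 => z; rewrite /quadf !mulmx0 mul0mx !mxE addr0 addr0. Qed.

Lemma quad_lin (b : 'cV[R]_n) : is_quad (fun z => (z *m b) 0 0).
Proof. by exists 0, b, 0 => z; rewrite /quadf mulmx0 mul0mx !mxE add0r addr0. Qed.

Lemma quad_mullin (b b' : 'cV[R]_n) : is_quad (fun z => (z *m b) 0 0 * (z *m b') 0 0).
Proof.
exists 0, 0, (b *m b'^T) => z; rewrite /quadf mulmx0 add0r.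
rewrite mulmxA -mulmxA -trmx_mul zmx_ij add0r [RHS]mxE big_ord1 [((z *m b')^T) 0 0]mxE //.
Qed.

Lemma quad_add (q q' : 'rV[R]_n -> R) : is_quad q -> is_quad q' -> is_quad (fun z => q z + q' z).
Proof.
move=> [c [b [S H]]] [c' [b' [S' H']]]; exists (c + c'), (b + b'), (S + S') => z.
rewrite H H' /quadf !mulmxDr !mulmxDl !addmx_ij; ring.
Qed.

Lemma quad_scale (t : R) (q : 'rV[R]_n -> R) : is_quad q -> is_quad (fun z => t * q z).
Proof.
move=> [c [b [S H]]]; exists (t * c), (t *: b), (t *: S) => z.
rewrite H /quadf -!scalemxAr -scalemxAl !scalmx_ij; ring.
Qed.

Lemma quad_sum (I : Type) (r : seq I) (F : I -> 'rV[R]_n -> R) :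
  (forall i, is_quad (F i)) -> is_quad (fun z => \sum_(i <- r) F i z).
Proof.
move=> HF; elim: r => [|i r IH].
  by apply: quad_ext (quad_cst 0) => z; rewrite big_nil.
by apply: quad_ext (quad_add (HF i) IH) => z; rewrite big_cons.
Qed.

Definition xv (i : nat) : 'cV[R]_n := \col_(k < n) ((k : nat) == i)%:R.

Lemma xc_lin (z : 'rV[R]_n) i : xc z i = (z *m xv i) 0 0.
Proof.
rewrite /xc mxE; case: (ltnP i n) => Hi.
  rewrite (nth_map (Ordinal Hi)) ?size_enum_ord //.
  have := nth_ord_enum (Ordinal Hi) (Ordinal Hi); rewrite /= => ->.
  rewrite (bigD1 (Ordinal Hi)) //= mxE eqxx mulr1 big1 ?addr0 // => k nk.
  rewrite mxE; case: eqP => [Ek|]; last by rewrite mulr0.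
  by case/eqP: nk; apply: val_inj.
rewrite nth_default; last by rewrite size_map size_enum_ord.
rewrite big1 // => k _.
by rewrite mxE (ltn_eqF (leq_trans (ltn_ord k) Hi)) mulr0.
Qed.
Lemma xc_coord (z : 'rV[R]_n) (i : 'I_n) : xc z i = z 0 i.
Proof.
rewrite xc_lin mxE (bigD1 i) //= mxE eqxx mulr1 big1 ?addr0 // => k nk.
by rewrite mxE (negbTE (nk : (k : nat) != i)) mulr0.
Qed.

Lemma quad_xc i : is_quad (fun z => xc z i).
Proof. by apply: quad_ext (quad_lin (xv i)) => z; rewrite xc_lin. Qed.

Lemma quad_xc2 i j : is_quad (fun z => xc z i * xc z j).
Proof.
by apply: quad_ext (quad_mullin (xv i) (xv j)) => z; rewrite !xc_lin.
Qed.

Lemma quad_phiL (k : 'I_n.+1) : is_quad (fun z => phiL z 0 k).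
Proof.
have H : is_quad (fun z => if k == 0 :> nat then 1 else xc z k.-1).
  by case: (nat_of_ord k == 0)%N; [exact: quad_cst | exact: quad_xc].
by apply: quad_ext H => z; rewrite mxE.
Qed.

Definition Gq (ij : nat * nat) (z : 'rV[R]_n) : R :=
  if ij.1 == ij.2 then (xc z ij.1) ^+ 2 / 2 else xc z ij.1 * xc z ij.2.

Definition idxQ : seq (nat * nat) :=
  flatten [seq [seq (i, j) | j <- iota i (n - i)] | i <- iota 0 n].

Lemma phiQ_seqE z : phiQ_seq z = [seq Gq ij z | ij <- idxQ].
Proof.
rewrite /phiQ_seq /idxQ map_flatten; congr flatten; rewrite -map_comp.
apply: eq_map => i /=; rewrite -map_comp; apply: eq_map => j //.
Qed.

Lemma quad_Gq ij : is_quad (Gq ij).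
Proof.
rewrite /Gq; case: (ij.1 == ij.2); last exact: quad_xc2.
by apply: quad_ext (quad_scale (2^-1) (quad_xc2 ij.1 ij.1)) => z; rewrite expr2 mulrC.
Qed.

Lemma quad_nth (s : seq (nat * nat)) k : is_quad (fun z => nth 0 [seq Gq ij z | ij <- s] k).
Proof.
elim: s k => [|a s IH] k /=.
  by apply: quad_ext (quad_cst 0) => z; rewrite nth_nil.
case: k => [|k] /=; [exact: quad_Gq | exact: IH].
Qed.

Lemma quad_phiQ k : is_quad (fun z => phiQ z 0 k).
Proof.
by apply: quad_ext (quad_nth idxQ k) => z; rewrite mxE phiQ_seqE.
Qed.

Lemma quad_lagr (aL : 'cV[R]_n.+1) (aQ : 'cV[R]_(nQ n)) : is_quad (lagr_eval aL aQ).
Proof.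
have H1 := quad_sum (index_enum 'I_n.+1) (fun k => quad_scale (aL k 0) (quad_phiL k)).
have H2 := quad_sum (index_enum 'I_(nQ n)) (fun k => quad_scale (aQ k 0) (quad_phiQ k)).
apply: quad_ext (quad_add H1 H2) => z.
rewrite /lagr_eval [(phiL z *m aL) 0 0]mxE [(phiQ z *m aQ) 0 0]mxE.
by congr (_ + _); apply: eq_bigr => k _; rewrite mulrC.
Qed.

End PartB.


Section PartC.
Variable R : realType.
Variable n : nat.

Lemma quadf_shift c b (S : 'M[R]_n) z v h :
  quadf c b S (h *: v + z) = quadf c b S z +
    h * ((v *m b) 0 0 + (z *m S *m v^T) 0 0 + (v *m S *m z^T) 0 0) +
    h ^+ 2 * (v *m S *m v^T) 0 0.
Proof.
rewrite /quadf linearD linearZ /= !mulmxDl !mulmxDr -!scalemxAl -!scalemxAr.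
rewrite !addmx_ij !scalmx_ij; ring.
Qed.

Lemma quad_D c b (S : 'M[R]_n) z v :
  'D_v (quadf c b S) z = (v *m b) 0 0 + (z *m S *m v^T) 0 0 + (v *m S *m z^T) 0 0.
Proof.
rewrite /derive; apply: (@lim_affine _ _ _ ((v *m S *m v^T) 0 0)) => h h0 /=.
rewrite quadf_shift [_ *: _]/(_ * _).
have key : forall (h Q A B : R), h != 0 -> h^-1 * (Q + h * A + h ^+ 2 * B - Q) = A + h * B.
  by move=> h1 Q A B h10; field.
exact: key.
Qed.

Lemma D_quad_fun c b (S : 'M[R]_n) v :
  (fun z => 'D_v (quadf c b S) z) = quadf ((v *m b) 0 0) (S *m v^T + (v *m S)^T) 0.
Proof.
apply: funext => z; rewrite quad_D /quadf mulmx0 mul0mx zmx_ij addr0 mulmxDr addmx_ij.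
have -> : (v *m S *m z^T) 0 0 = (z *m (v *m S)^T) 0 0.
  by rewrite -[(v *m S *m z^T)]trmxK trmx_mul trmxK mxE.
by rewrite mulmxA; ring.
Qed.

Lemma evec_form (A : 'M[R]_n) i j : (evec R i *m A *m (evec R j)^T) 0 0 = A i j.
Proof. by rewrite /evec trmx_delta mul_delta_col -rowE mxE. Qed.

Lemma hess_quadf c b (S : 'M[R]_n) x : hessian (quadf c b S) x = S + S^T.
Proof.
apply/matrixP => i j; rewrite mxE D_quad_fun quad_D.
rewrite !mulmx0 !mul0mx !zmx_ij !addr0 mulmxDr addmx_ij mulmxA evec_form.
rewrite trmx_mul mulmxA evec_form !mxE addrC //.
Qed.

Definition D2 (q : 'rV[R]_n -> R) z u := q (z + u) + q (z - u) - 2 * q z.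

Lemma D2_quadf c b (S : 'M[R]_n) z u : D2 (quadf c b S) z u = 2 * (u *m S *m u^T) 0 0.
Proof.
have E1 : z + u = 1 *: u + z by rewrite scale1r addrC.
have E2 : z - u = (-1) *: u + z by rewrite scaleN1r addrC.
rewrite /D2 E1 E2 !quadf_shift; ring.
Qed.

Lemma quad_struct q : is_quad q -> exists (S : 'M[R]_n),
  (forall z u, D2 q z u = 2 * (u *m S *m u^T) 0 0) /\
  (forall x, hessian q x = S + S^T).
Proof.
move=> [c [b [S H]]]; have Eq : q = quadf c b S by apply: funext.
by exists S; rewrite Eq; split => *; [exact: D2_quadf | exact: hess_quadf].
Qed.

Lemma tr11 (M : 'M[R]_1) : M^T 0 0 = M 0 0.
Proof. by rewrite mxE. Qed.

Lemma form_sym (S : 'M[R]_n) (a : 'cV[R]_n) :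
  (a^T *m (S + S^T) *m a) 0 0 = 2 * (a^T *m S *m a^T^T) 0 0.
Proof.
rewrite trmxK mulmxDr mulmxDl addmx_ij.
have -> : (a^T *m S^T *m a) 0 0 = (a^T *m S *m a) 0 0.
  by rewrite -tr11 !trmx_mul !trmxK mulmxA.
by ring.
Qed.

Lemma D2_scale q : is_quad q -> forall z t u, D2 q z (t *: u) = t ^+ 2 * D2 q z u.
Proof.
move=> /quad_struct [S [H _]] z t u; rewrite !H linearZ /= -scalemxAl -scalemxAr.
by rewrite -scalemxAl !scalmx_ij; ring.
Qed.

Lemma D2_base q : is_quad q -> forall z z' u, D2 q z u = D2 q z' u.
Proof. by move=> /quad_struct [S [H _]] z z' u; rewrite !H. Qed.

Lemma hess_form q : is_quad q -> forall x z (a : 'cV[R]_n),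
  (a^T *m hessian q x *m a) 0 0 = D2 q z a^T.
Proof. by move=> /quad_struct [S [H1 H2]] x z a; rewrite H2 H1 form_sym. Qed.

End PartC.


Section PartD.
Variable R : realType.

Lemma enorm_ge0 a b (A : 'M[R]_(a, b)) : 0 <= enorm A.
Proof. exact: sqrtr_ge0. Qed.

Lemma sumsq_ge0 a b (A : 'M[R]_(a, b)) : 0 <= \sum_i \sum_j (A i j) ^+ 2.
Proof. by rewrite sumr_ge0 // => i _; rewrite sumr_ge0 // => j _; rewrite sqr_ge0. Qed.

Lemma enorm_sqE a b (A : 'M[R]_(a, b)) : enorm A ^+ 2 = \sum_i \sum_j (A i j) ^+ 2.
Proof. by rewrite /enorm sqr_sqrtr // sumsq_ge0. Qed.

Lemma enorm_eq0 a b (A : 'M[R]_(a, b)) : enorm A = 0 -> A = 0.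
Proof.
move=> H; have : \sum_i \sum_j (A i j) ^+ 2 = 0 by rewrite -enorm_sqE H expr0n.
move/eqP; rewrite psumr_eq0; last by move=> i _; rewrite sumr_ge0 // => j _; rewrite sqr_ge0.
move/allP => Hi; apply/matrixP => i j; rewrite mxE.
have := Hi i (mem_index_enum _); rewrite implyTb psumr_eq0; last by move=> k _; rewrite sqr_ge0.
move/allP => Hj; have := Hj j (mem_index_enum _); rewrite implyTb sqrf_eq0.
by move/eqP.
Qed.

Lemma enorm_scale a b t (A : 'M[R]_(a, b)) : enorm (t *: A) = `|t| * enorm A.
Proof.
rewrite /enorm -sqrtr_sqr -sqrtrM ?sqr_ge0 //; congr Num.sqrt.
rewrite mulr_sumr; apply: eq_bigr => i _; rewrite mulr_sumr; apply: eq_bigr => j _.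
by rewrite mxE exprMn.
Qed.

Lemma enorm0 a b : enorm (0 : 'M[R]_(a, b)) = 0.
Proof.
rewrite /enorm big1 ?sqrtr0 // => i _; rewrite big1 // => j _; by rewrite mxE expr0n.
Qed.

Lemma enorm_tr_sq a0 (a : 'cV[R]_a0) : enorm a^T ^+ 2 = dot a a.
Proof.
rewrite enorm_sqE big_ord1 dotE; apply: eq_bigr => i _; by rewrite mxE expr2.
Qed.

Lemma opnorm_sym n (H : 'M[R]_n) M : H^T = H -> 0 <= M ->
  (forall a : 'cV[R]_n, `|dot a (H *m a)| <= M * dot a a) -> opnorm H <= M.
Proof.
move=> Hsym M0 HB; rewrite /opnorm; apply: ge_sup.
  exists (enorm (H *m (0 : 'cV[R]_n))), 0 => //=; rewrite enorm0 ler01 //.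
move=> _ [v /= Hv <-].
set w := H *m v; set N := enorm w.
have N0 : 0 <= N by exact: enorm_ge0.
have [->|Npos] := eqVneq N 0; first by [].
have Np : 0 < N by rewrite lt_def Npos N0.
set u := N^-1 *: w.
have dww : dot w w = N ^+ 2 by rewrite -enorm_sq.
have duu : dot u u = 1.
  by rewrite /u dotZl dotZr dww; field.
have dvv : dot v v <= 1.
  rewrite -enorm_sq; have := enorm_ge0 v; nra.
have Bsym : forall a b, dot a (H *m b) = dot b (H *m a).
  by move=> a b; rewrite dotC dot_mulmxl Hsym.
have Buv : dot u (H *m v) = N.
  by rewrite /u dotZl -/w dww; field.
have H1 := HB (u + v); have H2 := HB (u - v).
have E1 : dot (u + v) (H *m (u + v)) = dot u (H *m u) + 2 * N + dot v (H *m v).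
  rewrite mulmxDr !dotDl !dotDr Buv (Bsym v u) Buv; ring.
have E2 : dot (u - v) (H *m (u - v)) = dot u (H *m u) - 2 * N + dot v (H *m v).
  rewrite mulmxBr !dotBl !dotBr Buv (Bsym v u) Buv; ring.
have F1 : dot (u + v) (u + v) = dot u u + 2 * dot u v + dot v v.
  rewrite !dotDl !dotDr (dotC v u); ring.
have F2 : dot (u - v) (u - v) = dot u u - 2 * dot u v + dot v v.
  rewrite !dotBl !dotBr (dotC v u); ring.
rewrite E1 F1 in H1; rewrite E2 F2 in H2; rewrite duu in H1 H2.
move: H1 H2; set X := dot u (H *m u) + dot v (H *m v).
have -> : dot u (H *m u) + 2 * N + dot v (H *m v) = X + 2 * N by rewrite /X; ring.
have -> : dot u (H *m u) - 2 * N + dot v (H *m v) = X - 2 * N by rewrite /X; ring.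
move=> /ler_normlP [H1a H1b] /ler_normlP [H2a H2b].
nra.
Qed.

Lemma D2_bound n (q : 'rV[R]_n -> R) (c : 'rV[R]_n) d Lam :
  is_quad q -> 0 < d -> (forall z, enorm (z - c) <= d -> `|q z| <= Lam) ->
  forall u, `|D2 q c u| <= 4 * Lam * enorm u ^+ 2 / d ^+ 2.
Proof.
move=> Hq d0 Hb u.
have P0 : enorm (c - c) <= d by rewrite subrr enorm0 ltW.
have L0 : 0 <= Lam := le_trans (normr_ge0 _) (Hb c P0).
have [Eu|e0] := eqVneq (enorm u) 0.
  have u0 := enorm_eq0 Eu.
  rewrite Eu expr0n /= mulr0 mul0r u0 /D2 addr0 subr0.
  have -> : q c + q c - 2 * q c = 0 by ring.
  by rewrite normr0.
set e := enorm u.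
have epos : 0 < e by rewrite lt_def e0 enorm_ge0.
set t := d / e.
have te : t * e = d by rewrite /t divfK.
have tpos : 0 < t by rewrite /t divr_gt0.
have P1 : enorm (c + t *: u - c) <= d.
  by rewrite (addrC c) addrK enorm_scale gtr0_norm // te.
have P2 : enorm (c - t *: u - c) <= d.
  by rewrite addrAC subrr add0r -scaleNr enorm_scale normrN gtr0_norm // te.
have B1 := Hb _ P1; have B2 := Hb _ P2; have B0 := Hb _ P0.
have Ht := D2_scale Hq c t u.
have Hs : `|D2 q c (t *: u)| <= 4 * Lam.
  rewrite /D2 -/(c - t *: u).
  move: B0 B1 B2 => /ler_normlP [? ?] /ler_normlP [? ?] /ler_normlP [? ?].
  apply/ler_normlP; split; lra.
rewrite Ht normrM normrX gtr0_norm // in Hs.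
rewrite ler_pdivlMr ?exprn_gt0 // -te exprMn.
have := normr_ge0 (D2 q c u); nra.
Qed.

End PartD.


Section PartE.
Variable R : realType.
Variable n : nat.

Lemma dot_CS m (a b : 'cV[R]_m) : dot a b ^+ 2 <= dot a a * dot b b.
Proof.
have [A0|Apos] := eqVneq (dot a a) 0.
  by rewrite A0 mul0r (dot_eq0 A0) dot0l expr0n.
have A0 : 0 < dot a a by rewrite lt_def Apos dot_ge0.
set t := dot a b / dot a a.
have tA : t * dot a a = dot a b by rewrite /t divfK.
have H := dot_ge0 (b - t *: a).
rewrite !dotBl !dotBr !dotZl !dotZr (dotC b a) in H.
nra.
Qed.

Lemma rowdotE (u g : 'rV[R]_n) : (u *m g^T) 0 0 = dot u^T g^T.
Proof. by rewrite /dot trmxK. Qed.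

Lemma enorm_row_sq (u : 'rV[R]_n) : enorm u ^+ 2 = dot u^T u^T.
Proof. by rewrite -enorm_tr_sq trmxK. Qed.

Lemma CS (u g : 'rV[R]_n) : `|(u *m g^T) 0 0| <= enorm u * enorm g.
Proof.
rewrite rowdotE; have H := dot_CS u^T g^T.
rewrite -!enorm_row_sq in H.
have H' : dot u^T g^T ^+ 2 <= (enorm u * enorm g) ^+ 2 by rewrite exprMn.
rewrite -sqrtr_sqr; apply: le_trans (ler_wsqrtr H') _.
by rewrite sqrtr_sqr ger0_norm // mulr_ge0 // enorm_ge0.
Qed.

Lemma D_grad (f : 'rV[R]_n -> R) w v :
  differentiable f w -> 'D_v f w = (v *m (grad f w)^T) 0 0.
Proof.
move=> df; rewrite deriveE //.
rewrite [v in LHS]matrix_sum_delta big_ord1 linear_sum mxE.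
apply: eq_bigr => j _; rewrite linearZ /= -deriveE // mxE mxE.
by rewrite (ord1 _) /evec.
Qed.

Lemma phi_derive (f : 'rV[R]_n -> R) a d s :
  differentiable f (a + s *: d) ->
  is_derive s 1 (fun t => f (a + t *: d)) ('D_d f (a + s *: d)).
Proof.
move=> df.
have Efun : (fun h : R => h^-1 *: (((fun t => f (a + t *: d)) \o shift s) (h *: 1)
                 - f (a + s *: d))) =
            (fun h : R => h^-1 *: ((f \o shift (a + s *: d)) (h *: d) - f (a + s *: d))).
  apply: funext => h /=; congr (_ *: (f _ - _)).
  by rewrite [h *: 1]mulr1 scalerDl addrCA addrA.
apply: DeriveDef.
  rewrite /derivable Efun; exact: diff_derivable.
by rewrite /derive Efun.
Qed.

Lemma itv01 (x : R) : x \in `]0, 1[ -> 0 <= x <= 1.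
Proof. by rewrite in_itv /= => /andP [h1 h2]; rewrite !ltW. Qed.

Lemma taylor (f : 'rV[R]_n -> R) (X : set 'rV[R]_n) L a z :
  (forall x, X x -> differentiable f x) ->
  (forall x w, X x -> X w -> enorm (grad f x - grad f w) <= L * enorm (x - w)) ->
  (forall s : R, 0 <= s <= 1 -> X (a + s *: (z - a))) ->
  `|f z - f a - ((z - a) *m (grad f a)^T) 0 0| <= L * enorm (z - a) ^+ 2.
Proof.
move=> Hd HL Hseg; set d := z - a; set phi := fun t : R => f (a + t *: d).
have Hder : forall s : R, 0 <= s <= 1 -> is_derive s 1 phi ('D_d f (a + s *: d)).
  by move=> s hs; apply: phi_derive; apply: Hd; apply: Hseg.
have cont : {within `[0, 1], continuous phi}.
  apply: derivable_within_continuous => x; rewrite in_itv /= => hx.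
  by have [] := Hder x hx.
have [c c01 Hc] := @MVT R phi (fun s => 'D_d f (a + s *: d)) 0 1 ltr01
  (fun x hx => Hder x (itv01 hx)) cont.
have phi1 : phi 1 = f z by rewrite /phi scale1r addrC subrK.
have phi0 : phi 0 = f a by rewrite /phi scale0r addr0.
have hc := itv01 c01.
rewrite phi1 phi0 subr0 mulr1 D_grad in Hc; last by apply: Hd; apply: Hseg.
have -> : f z - f a - (d *m (grad f a)^T) 0 0 =
          (d *m (grad f (a + c *: d) - grad f a)^T) 0 0.
  by rewrite Hc [(_ - _)^T]raddfB mulmxBr addmx_ij oppmx_ij.
apply: le_trans (CS _ _) _.
have H0a : X (a + 0 *: (z - a)) by apply: Hseg; rewrite lexx ler01.
have H1 := HL _ _ (Hseg c hc) H0a.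
rewrite scale0r addr0 addrAC subrr add0r enorm_scale ger0_norm in H1; last by case/andP: hc.
have e0 := enorm_ge0 d.
have g0 := enorm_ge0 (grad f (a + c *: d) - grad f a).
move: c01; rewrite in_itv /= => /andP [c0 c1].
have HH : enorm d * enorm (grad f (a + c *: d) - grad f a) <= enorm d * (L * (c * enorm d)).
  by apply: ler_wpM2l.
have HH2 := HH; apply: le_trans HH _; rewrite expr2.
have [L0|L0] := leP 0 L.
  have : 0 <= L * enorm d * enorm d * (1 - c).
    by rewrite !mulr_ge0 // subr_ge0 ltW.
  nra.
have [e00|epos] := eqVneq (enorm d) 0; first by rewrite e00 !(mulr0, mul0r).
have ep : 0 < enorm d by rewrite lt_def epos e0.
have : enorm d * (L * (c * enorm d)) < 0.
  by rewrite pmulr_rlt0 // nmulr_rlt0 // mulr_gt0.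
move=> H2; have := le_trans (mulr_ge0 e0 g0) HH2; by rewrite leNgt H2.
Qed.

End PartE.


Section PartF.
Variable R : realType.

Lemma lin_repr_aff n p (y : 'I_p.+1 -> 'rV[R]_n) aL aQ :
  mfn_poised y -> (forall j, mfn_lagrange_coeffs y j (aL j) (aQ j)) ->
  forall z c (b : 'cV[R]_n),
  \sum_j (c + (y j *m b) 0 0) * lagr_eval (aL j) (aQ j) z = c + (z *m b) 0 0.
Proof.
move=> Hp Hl z c b.
have Hk k : \sum_j phiL (y j) 0 k * lagr_eval (aL j) (aQ j) z = phiL z 0 k.
  have := congr1 (fun M : 'cV[R]_(n.+1) => M k 0) (lin_repr Hp Hl z).
  rewrite mxE [RHS]mxE => <-; apply: eq_bigr => j _; rewrite !mxE //.
have E0 : \sum_j lagr_eval (aL j) (aQ j) z = 1.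
  have := Hk ord0; rewrite [RHS]mxE /= => <-; apply: eq_bigr => j _.
  by rewrite mxE /= mul1r.
have Ei (i : 'I_n) : \sum_j y j 0 i * lagr_eval (aL j) (aQ j) z = z 0 i.
  have := Hk (lift ord0 i); rewrite [RHS]mxE /= xc_coord => <-.
  by apply: eq_bigr => j _; rewrite mxE /= xc_coord.
under eq_bigr => j _ do rewrite mulrDl.
rewrite big_split /= -mulr_sumr E0 mulr1; congr (_ + _).
rewrite mxE; under eq_bigr => j _ do rewrite mxE mulr_suml.
rewrite exchange_big /=; apply: eq_bigr => i _.
rewrite -Ei mulr_suml; apply: eq_bigr => j _; ring.
Qed.

Lemma D2_sum n p (q : 'I_p.+1 -> 'rV[R]_n -> R) (g : 'I_p.+1 -> R) z u :
  D2 (fun w => \sum_j q j w * g j) z u = \sum_j D2 (q j) z u * g j.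
Proof.
rewrite /D2 mulr_sumr -big_split -sumrB /=; apply: eq_bigr => j _; ring.
Qed.

Lemma enorm_evec n (i : 'I_n) : enorm (evec R i) = 1.
Proof.
rewrite /enorm big_ord1 (bigD1 i) //= big1 ?addr0.
  by rewrite mxE !eqxx expr1n sqrtr1.
by move=> k nk; rewrite mxE (negbTE nk) andbF expr0n.
Qed.

Lemma cdelta_bounds (dm : R) : 0 < dm -> 0 < cdelta dm <= 1.
Proof.
move=> dm0; rewrite /cdelta; apply/andP; split.
  by rewrite !lt_min ltr01 invr_gt0 dm0 invr_gt0 exprn_gt0.
by rewrite ge_min lexx.
Qed.

End PartF.

Unset Implicit Arguments.
Theorem theorem3 (R : realType) (n p : nat) (f : 'rV[R]_n -> R)
    (L : R) (X : set 'rV[R]_n) (delta deltamax Lam kappa : R)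
    (y : 'I_p.+1 -> 'rV[R]_n)
    (alphaL : 'I_p.+1 -> 'cV[R]_(n.+1)) (alphaQ : 'I_p.+1 -> 'cV[R]_(nQ n))
    (gamma : 'I_p.+1 -> R) :
  open X -> bounded_set X ->
  (forall x, X x -> differentiable f x) ->
  (forall x z, X x -> X z -> enorm (grad f x - grad f z) <= L * enorm (x - z)) ->
  (n < p)%N -> (p < qdim n)%N ->
  0 < delta ->
  cball (y ord0) delta `<=` X ->
  (forall i, cball (y ord0) delta (y i)) ->
  mfn_poised y ->
  0 < Lam ->
  mfn_Lambda_poised y Lam (cball (y ord0) delta) ->
  0 < deltamax -> delta <= deltamax ->
  0 <= kappa ->
  (forall j, mfn_lagrange_coeffs y j (alphaL j) (alphaQ j)) ->
  (forall i, `| \sum_j lagr_eval (alphaL j) (alphaQ j) (y i) * gamma j - f (y i) |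
               <= kappa * delta ^+ 2) ->
  forall x : 'rV[R]_n,
    opnorm (hessian (fun z => \sum_j lagr_eval (alphaL j) (alphaQ j) z * gamma j) x)
      <= (kappa + L / 2) *
         (4 * Lam * p.+1%:R * Num.sqrt (2 * (qdim n).+1%:R)) / (cdelta deltamax) ^+ 2.
Proof.
move=> HXo HXb Hd HL Hnp Hpq d0 Hball Hy Hpois Lam0 HLP dm0 ddm k0 Hlag Hint x.
set l := fun j => lagr_eval (alphaL j) (alphaQ j).
set m := fun z => \sum_j lagr_eval (alphaL j) (alphaQ j) z * gamma j.
set y0 := y ord0.
have quad_l : forall j, is_quad (l j) := fun j => quad_lagr _ _.
have quad_m : is_quad m.
  apply: quad_ext (quad_sum (index_enum _) (fun j => quad_scale (gamma j) (quad_l j))) => z.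
  by rewrite /m; apply: eq_bigr => j _; rewrite mulrC.
have n0 : (0 < n)%N by move: Hpq; case: (n) => //; rewrite /qdim /=.
have L0 : 0 <= L.
  pose e0 : 'I_n := Ordinal n0.
  have B0 : X y0 by apply: Hball; rewrite /cball /= subrr enorm0 ltW.
  have B1 : X (y0 + delta *: evec R e0).
    by apply: Hball; rewrite /cball /= addrAC subrr add0r enorm_scale enorm_evec ger0_norm ?mulr1 // ltW.
  have := HL _ _ B1 B0; rewrite addrAC subrr add0r enorm_scale enorm_evec ger0_norm ?mulr1; last exact: ltW.
  move=> H; have := le_trans (enorm_ge0 _) H; by rewrite pmulr_lge0.
set G := (grad f y0)^T.
set g := fun z : 'rV[R]_n => f y0 + ((z - y0) *m G) 0 0.
have gE : forall z, g z = (f y0 - (y0 *m G) 0 0) + (z *m G) 0 0.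
  by move=> z; rewrite /g mulmxBl addmx_ij oppmx_ij; ring.
have repr : forall z, \sum_j l j z * g (y j) = g z.
  move=> z; rewrite gE -(lin_repr_aff Hpois Hlag z).
  by apply: eq_bigr => j _; rewrite gE mulrC.
have D2g : forall u, D2 g y0 u = 0.
  by move=> u; rewrite /D2 !gE !mulmxDl ?mulmxBl ?mulNmx !addmx_ij ?oppmx_ij; ring.
have D2m : forall u, D2 m y0 u = \sum_j (gamma j - g (y j)) * D2 (l j) y0 u.
  move=> u.
  have H0 : \sum_j D2 (l j) y0 u * g (y j) = 0.
    rewrite -D2_sum -[RHS](D2g u) /D2 /= !repr //.
  rewrite D2_sum.
  under [RHS]eq_bigr => j _ do rewrite mulrBl.
  rewrite sumrB.
  have -> : \sum_j g (y j) * D2 (l j) y0 u = 0.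
    by rewrite -[RHS]H0; apply: eq_bigr => j _; rewrite mulrC.
  by rewrite subr0; apply: eq_bigr => j _; rewrite mulrC.
have Hr : forall j, `|gamma j - g (y j)| <= (kappa + L) * delta ^+ 2.
  move=> j.
  have mj : m (y j) = gamma j.
    rewrite /m (bigD1 j) //= (interp Hlag) eqxx mul1r big1 ?addr0 // => i nij.
    by rewrite (interp Hlag) eq_sym (negbTE nij) mul0r.
  have Hj : `|m (y j) - f (y j)| <= kappa * delta ^+ 2 := Hint j.
  rewrite mj in Hj.
  have ej : enorm (y j - y0) <= delta := Hy j.
  have seg : forall s : R, 0 <= s <= 1 -> X (y0 + s *: (y j - y0)).
    move=> s /andP [s0 s1]; apply: Hball; rewrite /cball /= addrAC subrr add0r.
    rewrite enorm_scale ger0_norm //.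
    have := enorm_ge0 (y j - y0); nra.
  have T := taylor Hd HL seg.
  have T2 : L * enorm (y j - y0) ^+ 2 <= L * delta ^+ 2.
    have E2 : enorm (y j - y0) ^+ 2 <= delta ^+ 2.
      by rewrite ler_sqr ?nnegrE ?enorm_ge0 // ltW.
    by apply: ler_pM => //; exact: sqr_ge0.
  have -> : gamma j - g (y j) = (gamma j - f (y j)) + (f (y j) - f y0 - ((y j - y0) *m G) 0 0).
    by rewrite /g; ring.
  apply: le_trans (ler_normD _ _) _.
  have := le_trans T T2; lra.
have Hl : forall j u, `|D2 (l j) y0 u| <= 4 * Lam * enorm u ^+ 2 / delta ^+ 2.
  move=> j; apply: D2_bound (quad_l j) d0 _ => z Hz.
  exact: (lagr_bound Hpois Hlag j HLP Hz).
set M := p.+1%:R * ((kappa + L) * (4 * Lam)).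
have KL0 : 0 <= kappa + L by lra.
have HM : forall a : 'cV[R]_n, `|dot a (hessian m x *m a)| <= M * dot a a.
  move=> a.
  have -> : dot a (hessian m x *m a) = (a^T *m hessian m x *m a) 0 0 by rewrite /dot mulmxA.
  rewrite (hess_form quad_m x y0 a) D2m.
  apply: le_trans (ler_norm_sum _ _ _) _.
  apply: le_trans (_ : \sum_(j < p.+1) (kappa + L) * delta ^+ 2 * (4 * Lam * dot a a / delta ^+ 2) <= _).
    apply: ler_sum => j _; rewrite normrM; apply: ler_pM; rewrite ?normr_ge0 //.
    by rewrite -enorm_tr_sq; apply: Hl.
  rewrite sumr_const card_ord -[_ *+ p.+1]mulr_natl /M.
  have dn0 : delta != 0 by rewrite gt_eqF.
  rewrite le_eqVlt; apply/orP; left; apply/eqP; field; exact: dn0.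
have Hsym : (hessian m x)^T = hessian m x.
  have [S [_ H2]] := quad_struct quad_m.
  by rewrite H2 raddfD /= trmxK addrC.
have P0 : 0 < p.+1%:R :> R by rewrite ltr0n.
have M0 : 0 <= M by rewrite /M !mulr_ge0 // ?ltW.
apply: le_trans (opnorm_sym Hsym M0 HM) _.
have q1 : (1 <= qdim n)%N by apply: leq_trans _ Hpq.
have Q2 : (2 : R) <= (qdim n).+1%:R by rewrite ler_nat ltnS.
have s2 : (2:R) <= Num.sqrt (2 * (qdim n).+1%:R).
  have E : 2 = Num.sqrt (2 ^+ 2) :> R by rewrite sqrtr_sqr ger0_norm.
  rewrite [X in X <= _]E; apply: ler_wsqrtr.
  rewrite expr2; apply: ler_wpM2l => //.
have [c0 c1] := andP (cdelta_bounds dm0).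
set c := cdelta deltamax in c0 c1 *.
set s := Num.sqrt (2 * (qdim n).+1%:R) in s2 *.
have K0 : 0 <= kappa + L / 2 by lra.
have c2 : 0 < c ^+ 2 by rewrite exprn_gt0.
have c21 : c ^+ 2 <= 1 by rewrite expr_le1 // ltW.
rewrite ler_pdivlMr //.
have A0 : 0 <= 4 * Lam * p.+1%:R by rewrite !mulr_ge0 // ltW.
have H1 : M <= (kappa + L / 2) * (4 * Lam * p.+1%:R * s).
  rewrite /M.
  have : kappa + L <= (kappa + L / 2) * s by nra.
  move=> H; have := ler_wpM2l A0 H; rewrite !mulrA.
  move=> H'; apply: le_trans _ (le_trans H' _); first by rewrite le_eqVlt; apply/orP; left; apply/eqP; ring.
  by rewrite le_eqVlt; apply/orP; left; apply/eqP; ring.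
apply: le_trans (_ : M * c ^+ 2 <= M) _; first exact: ler_piMr.
exact: H1.
Qed.
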